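(* For any $\boldsymbol{x},\boldsymbol{x}^\star\in\mathbb{T}^3$ there exist $N\in\mathbb{N}$ and $\underline{\omega}^N=(\omega_1,\dots,\omega_N)\in\Omega_0^N$ such that $f_{\underline{\omega}^N}(\boldsymbol{x})=\boldsymbol{x}^\star$; that is, the one-point process is exactly controllable.
   Context: $\mathbb{T}^3=\mathbb{R}^3/(2\pi\mathbb{Z})^3$ with points $\boldsymbol{x}=(x,y,z)$. Fix $U>0$ and let $\Omega_0=[-U,U]^3\times[0,2\pi)^3$, with elements $\omega=(\mathsf{A},\mathsf{B},\mathsf{C},\alpha,\beta,\gamma)$. Define maps of $\mathbb{T}^3$: $f_{(\mathsf{A},\alpha)}(x,y,z)=(x+\mathsf{A}\sin(z+\alpha),\ y+\mathsf{A}\cos(z+\alpha),\ z)$, $f_{(\mathsf{B},\beta)}(x,y,z)=(x,\ y+\mathsf{B}\sin(x+\beta),\ z+\mathsf{B}\cos(x+\beta))$, $f_{(\mathsf{C},\gamma)}(x,y,z)=(x+\mathsf{C}\cos(y+\gamma),\ y,\ z+\mathsf{C}\sin(y+\gamma))$, and $f_\omega=f_{(\mathsf{C},\gamma)}\circ f_{(\mathsf{B},\beta)}\circ f_{(\mathsf{A},\alpha)}$. For $\underline{\omega}^N=(\omega_1,\dots,\omega_N)\in\Omega_0^N$, $f_{\underline{\omega}^N}=f_{\omega_N}\circ\cdots\circ f_{\omega_1}$. *)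

(* Defs.v *)
From Stdlib Require Import Reals List.
Open Scope R_scope.

(* Points of R^3 serve as lifts of points of T^3 = R^3/(2 pi Z)^3. *)
Definition pt3 : Type := (R * R * R)%type.

Definition cong2pi (a b : R) : Prop := exists k : Z, a - b = 2 * PI * IZR k.

Definition torus_eq (p q : pt3) : Prop :=
  match p, q with
  | (x, y, z), (x', y', z') => cong2pi x x' /\ cong2pi y y' /\ cong2pi z z'
  end.

Record omega : Type := mkOmega
  { oA : R; oB : R; oC : R; oalpha : R; obeta : R; ogamma : R }.

Definition in_Omega0 (U : R) (w : omega) : Prop :=
  -U <= oA w <= U /\ -U <= oB w <= U /\ -U <= oC w <= U /\
  0 <= oalpha w < 2 * PI /\ 0 <= obeta w < 2 * PI /\ 0 <= ogamma w < 2 * PI.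

Definition fA (A alpha : R) (p : pt3) : pt3 :=
  match p with (x, y, z) =>
    (x + A * sin (z + alpha), y + A * cos (z + alpha), z) end.

Definition fB (B beta : R) (p : pt3) : pt3 :=
  match p with (x, y, z) =>
    (x, y + B * sin (x + beta), z + B * cos (x + beta)) end.

Definition fC (C gamma : R) (p : pt3) : pt3 :=
  match p with (x, y, z) =>
    (x + C * cos (y + gamma), y, z + C * sin (y + gamma)) end.

(* f_omega = f_(C,gamma) o f_(B,beta) o f_(A,alpha) (lifted to R^3;
   well defined on T^3 by 2pi-periodicity of sin, cos) *)
Definition f_omega (w : omega) (p : pt3) : pt3 :=
  fC (oC w) (ogamma w) (fB (oB w) (obeta w) (fA (oA w) (oalpha w) p)).

Definition f_seq (ws : list omega) (p : pt3) : pt3 :=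
  fold_left (fun q w => f_omega w q) ws p.

(* Main.v *)
From Stdlib Require Import Reals Lra Lia ZArith List.
Open Scope R_scope.

Lemma per_Z u k : sin (u + 2 * IZR k * PI) = sin u /\ cos (u + 2 * IZR k * PI) = cos u.
Proof.
  destruct k as [|p|p].
  - replace (u + 2 * IZR 0 * PI) with u by (simpl; ring). tauto.
  - assert (E : IZR (Z.pos p) = INR (Pos.to_nat p)).
    { rewrite INR_IZR_INZ. f_equal. lia. }
    rewrite E. split; [apply sin_period|apply cos_period].
  - assert (E : IZR (Z.neg p) = - INR (Pos.to_nat p)).
    { rewrite INR_IZR_INZ, <- opp_IZR. f_equal. lia. }
    rewrite E. set (v := u + 2 * - INR (Pos.to_nat p) * PI).
    assert (Hu : u = v + 2 * INR (Pos.to_nat p) * PI) by (unfold v; ring).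
    split; [rewrite Hu at 1; symmetry; apply sin_period | rewrite Hu at 1; symmetry; apply cos_period].
Qed.

Lemma choose_angle z t : exists a, 0 <= a < 2 * PI /\ sin (z + a) = sin t /\ cos (z + a) = cos t.
Proof.
  pose proof PI_RGT_0 as HPI.
  set (r := (t - z) / (2 * PI)).
  destruct (archimed r) as [H1 H2].
  set (k := (up r - 1)%Z).
  assert (Hk : IZR k = IZR (up r) - 1) by (unfold k; rewrite minus_IZR; reflexivity).
  exists (t - z - 2 * PI * IZR k).
  assert (Hr : t - z = 2 * PI * r) by (unfold r; field; lra).
  split.
  - rewrite Hr. split.
    + assert (0 <= r - IZR k) by lra. nra.
    + assert (r - IZR k < 1) by lra. nra.
  - replace (z + (t - z - 2 * PI * IZR k)) with (t + 2 * IZR (- k) * PI)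
      by (rewrite opp_IZR; ring).
    apply per_Z.
Qed.

Require Import Defs.

Lemma Rabs_le_inv a b : Rabs a <= b -> - b <= a <= b.
Proof. unfold Rabs; destruct (Rcase_abs a); intros; lra. Qed.

Ltac tri := apply (f_equal2 pair); [apply (f_equal2 pair)|]; ring.

Lemma f_seq_app l1 l2 p : f_seq (l1 ++ l2) p = f_seq l2 (f_seq l1 p).
Proof. unfold f_seq. apply fold_left_app. Qed.

Lemma f_seq_cons w l p : f_seq (w :: l) p = f_seq l (f_omega w p).
Proof. reflexivity. Qed.

Lemma stepX U d x y z : Rabs d <= U ->
  exists w, in_Omega0 U w /\ f_omega w (x, y, z) = (x + d, y, z).
Proof.
  intros Hd. pose proof PI_RGT_0.
  destruct (choose_angle z (PI/2)) as [a [Ha [Hs Hc]]].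
  exists (mkOmega d 0 0 a 0 0). apply Rabs_le_inv in Hd.
  split. { unfold in_Omega0; simpl; repeat split; lra. }
  unfold f_omega, fA, fB, fC; simpl. rewrite !Rmult_0_l, !Rplus_0_r. rewrite ?Hs, Hc, sin_PI2, cos_PI2.
  tri.
Qed.

Lemma stepY U d x y z : Rabs d <= U ->
  exists w, in_Omega0 U w /\ f_omega w (x, y, z) = (x, y + d, z).
Proof.
  intros Hd. pose proof PI_RGT_0.
  destruct (choose_angle x (PI/2)) as [a [Ha [Hs Hc]]].
  exists (mkOmega 0 d 0 0 a 0). apply Rabs_le_inv in Hd.
  split. { unfold in_Omega0; simpl; repeat split; lra. }
  unfold f_omega, fA, fB, fC; simpl. rewrite !Rmult_0_l, !Rplus_0_r. rewrite ?Hs, Hc, sin_PI2, cos_PI2.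
  tri.
Qed.

Lemma stepZ U d x y z : Rabs d <= U ->
  exists w, in_Omega0 U w /\ f_omega w (x, y, z) = (x, y, z + d).
Proof.
  intros Hd. pose proof PI_RGT_0.
  destruct (choose_angle x 0) as [a [Ha [Hs Hc]]].
  exists (mkOmega 0 d 0 0 a 0). apply Rabs_le_inv in Hd.
  split. { unfold in_Omega0; simpl; repeat split; lra. }
  unfold f_omega, fA, fB, fC; simpl. rewrite !Rmult_0_l, !Rplus_0_r. rewrite ?Hs, Hc, sin_0, cos_0.
  tri.
Qed.

Lemma movesX U d n : Rabs d <= U -> forall x y z,
  exists ws, Forall (in_Omega0 U) ws /\ f_seq ws (x, y, z) = (x + INR n * d, y, z).
Proof.
  intros Hd. induction n as [|n IH]; intros x y z.
  - exists nil. split; [constructor|]. simpl. tri.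
  - destruct (stepX U d x y z Hd) as [w [Hw E]].
    destruct (IH (x + d) y z) as [ws [Hws E2]].
    exists (w :: ws). split; [constructor; auto|].
    rewrite f_seq_cons, E, E2, S_INR. tri.
Qed.

Lemma movesY U d n : Rabs d <= U -> forall x y z,
  exists ws, Forall (in_Omega0 U) ws /\ f_seq ws (x, y, z) = (x, y + INR n * d, z).
Proof.
  intros Hd. induction n as [|n IH]; intros x y z.
  - exists nil. split; [constructor|]. simpl. tri.
  - destruct (stepY U d x y z Hd) as [w [Hw E]].
    destruct (IH x (y + d) z) as [ws [Hws E2]].
    exists (w :: ws). split; [constructor; auto|].
    rewrite f_seq_cons, E, E2, S_INR. tri.
Qed.

Lemma movesZ U d n : Rabs d <= U -> forall x y z,
  exists ws, Forall (in_Omega0 U) ws /\ f_seq ws (x, y, z) = (x, y, z + INR n * d).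
Proof.
  intros Hd. induction n as [|n IH]; intros x y z.
  - exists nil. split; [constructor|]. simpl. tri.
  - destruct (stepZ U d x y z Hd) as [w [Hw E]].
    destruct (IH x y (z + d)) as [ws [Hws E2]].
    exists (w :: ws). split; [constructor; auto|].
    rewrite f_seq_cons, E, E2, S_INR. tri.
Qed.

Lemma split_dist U D : 0 < U -> exists n d, Rabs d <= U /\ INR n * d = D.
Proof.
  intros hU.
  destruct (archimed (Rabs D / U)) as [H1 _].
  set (n := S (Z.to_nat (up (Rabs D / U)))).
  assert (Hn : Rabs D / U < INR n).
  { unfold n. rewrite S_INR. destruct (Z_lt_le_dec (up (Rabs D / U)) 0).
    - assert (0 <= Rabs D / U) by (unfold Rdiv; apply Rmult_le_pos; [apply Rabs_pos|left; apply Rinv_0_lt_compat; lra]).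
      apply IZR_lt in l. pose proof (pos_INR (Z.to_nat (up (Rabs D / U)))). lra.
    - rewrite INR_IZR_INZ, Z2Nat.id by lia. lra. }
  assert (Hpos : 0 < INR n) by (unfold n; apply lt_0_INR; lia).
  exists n, (D / INR n). split.
  - unfold Rdiv. rewrite Rabs_mult, Rabs_inv, (Rabs_right (INR n)) by lra.
    apply (Rmult_le_reg_r (INR n)); [lra|].
    rewrite Rmult_assoc, Rinv_l by lra.
    apply (Rmult_lt_compat_r U) in Hn; [|lra].
    unfold Rdiv in Hn. rewrite Rmult_assoc, Rinv_l in Hn by lra. lra.
  - field. lra.
Qed.

Theorem lemma3p1 (U : R) (hU : 0 < U) (x xstar : pt3) :
  exists (N : nat) (ws : list omega),
    length ws = N /\ Forall (in_Omega0 U) ws /\ torus_eq (f_seq ws x) xstar.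
Proof.
  destruct x as [[x1 x2] x3]. destruct xstar as [[a b] c].
  destruct (split_dist U (a - x1) hU) as [n1 [d1 [H1 E1]]].
  destruct (split_dist U (b - x2) hU) as [n2 [d2 [H2 E2]]].
  destruct (split_dist U (c - x3) hU) as [n3 [d3 [H3 E3]]].
  destruct (movesX U d1 n1 H1 x1 x2 x3) as [l1 [F1 G1]].
  destruct (movesY U d2 n2 H2 (x1 + INR n1 * d1) x2 x3) as [l2 [F2 G2]].
  destruct (movesZ U d3 n3 H3 (x1 + INR n1 * d1) (x2 + INR n2 * d2) x3) as [l3 [F3 G3]].
  exists (length (l1 ++ l2 ++ l3)), (l1 ++ l2 ++ l3).
  split; [reflexivity|]. split.
  - apply Forall_app; split; [|apply Forall_app; split]; assumption.
  - rewrite !f_seq_app, G1, G2, G3. rewrite E1, E2, E3. simpl.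
    repeat split; exists 0%Z; simpl; ring.
Qed.
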